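(* Let $\gamma_1,\dots,\gamma_r>0$ with $\gamma_{\min}=\min_i\gamma_i\ge\sqrt2$. Let $P$ be the solution of $A_\gamma^\top P+PA_\gamma=-I$ and $\Gamma=-A_\gamma^{-1}B=[(\gamma_1\cdots\gamma_r)^{-1},(\gamma_2\cdots\gamma_r)^{-1},\dots,\gamma_r^{-1}]^\top$. Then $\|P\Gamma\|\le\frac{C'}{\gamma_{\min}^2}$ for some constant $C'$ that does not depend on the $\gamma_i$'s.
   Context: $A_\gamma$ is the $r\times r$ matrix with diagonal entries $-\gamma_1,\dots,-\gamma_r$, entries $1$ on the superdiagonal and zeros elsewhere; $B=[0,\dots,0,1]^\top$. The indices are ordered so that $\gamma_r=\gamma_{\min}$. Norms are 2-norms. *)

(* Defs.v *)
From HB Require Import structures.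
From mathcomp Require Import all_boot all_order all_algebra.
Set Implicit Arguments. Unset Strict Implicit. Unset Printing Implicit Defensive.
Import Order.TTheory GRing.Theory Num.Theory.
Local Open Scope ring_scope.

Definition Agamma (R : ringType) (n : nat) (g : 'I_n -> R) : 'M[R]_n :=
  \matrix_(i, j) (if i == j then - g i
                  else if (j : nat) == i.+1 then 1 else 0).

Definition Bvec (R : ringType) (n : nat) : 'cV[R]_n.+1 :=
  \col_(i < n.+1) (if i == ord_max then 1 else 0).

Definition Gammavec (R : comUnitRingType) (n : nat) (g : 'I_n.+1 -> R) : 'cV[R]_n.+1 :=
  - (invmx (Agamma g) *m Bvec R n).

Definition norm2 (R : rcfType) (n : nat) (v : 'cV[R]_n) : R :=
  Num.sqrt (\sum_(i < n) v i 0 ^+ 2).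

(* Main.v *)
Require Import Defs.
From HB Require Import structures.
From mathcomp Require Import all_boot all_order all_algebra.
From mathcomp Require Import ring lra zify.
Import Order.TTheory GRing.Theory Num.Theory.
Local Open Scope ring_scope.

Lemma Aent (R : ringType) n (g : 'I_n -> R) k i :
  Agamma g k i = (if k == i then - g i else 0) + (if (i:nat) == k.+1 then 1 else 0).
Proof.
rewrite /Agamma mxE; case: eqP => [->|_]; last by rewrite add0r.
rewrite ifF ?addr0 //; apply/negbTE; lia.
Qed.

Lemma sum_if_pred (R : ringType) m (f : 'I_m -> R) (b : 'I_m -> bool) (k0 : 'I_m) :
  (forall k, b k = (k == k0)) -> \sum_k (if b k then f k else 0) = f k0.
Proof.
move=> hb; rewrite -big_mkcond /=; rewrite (big_pred1 k0) //.
Qed.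

Lemma sum_if_none (R : ringType) m (f : 'I_m -> R) (b : 'I_m -> bool) :
  (forall k, b k = false) -> \sum_k (if b k then f k else 0) = 0.
Proof. by move=> hb; apply: big1 => k _; rewrite hb. Qed.

Lemma ATP (R : comRingType) n (g : 'I_n -> R) (P : 'M[R]_n) i j :
  ((Agamma g)^T *m P) i j = - g i * P i j + \sum_(k < n) (if (i:nat) == k.+1 then P k j else 0).
Proof.
rewrite mxE.
under eq_bigr do rewrite mxE Aent mulrDl.
rewrite big_split /=; congr (_ + _).
  rewrite (bigD1 i) //= eqxx big1 ?addr0 // => k /negbTE ->; by rewrite mul0r.
by apply: eq_bigr => k _; case: ifP; rewrite ?mul1r ?mul0r.
Qed.

Lemma PA (R : comRingType) n (g : 'I_n -> R) (P : 'M[R]_n) i j :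
  (P *m Agamma g) i j = - g j * P i j + \sum_(k < n) (if (j:nat) == k.+1 then P i k else 0).
Proof.
rewrite mxE.
under eq_bigr do rewrite Aent mulrDr.
rewrite big_split /=; congr (_ + _).
  rewrite (bigD1 j) //= eqxx mulrC big1 ?addr0 // => k /negbTE ->; by rewrite mulr0.
by apply: eq_bigr => k _; case: ifP; rewrite ?mulr1 ?mulr0.
Qed.

Lemma AG (R : comRingType) n (g : 'I_n -> R) (G : 'cV[R]_n) i :
  (Agamma g *m G) i 0 = - g i * G i 0 + \sum_(k < n) (if (k:nat) == i.+1 then G k 0 else 0).
Proof.
rewrite mxE.
under eq_bigr do rewrite Aent mulrDl.
rewrite big_split /=; congr (_ + _).
  rewrite (bigD1 i) //= eqxx big1 ?addr0 // => k; rewrite eq_sym => /negbTE ->; by rewrite mul0r.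
by apply: eq_bigr => k _; case: ifP; rewrite ?mul1r ?mul0r.
Qed.

(* Dimension r = n.+1 >= 1; index ord_max is the last index r, with gamma_r = gamma_min. *)
Theorem lemma4 (R : rcfType) (n : nat) :
  exists C : R, forall (g : 'I_n.+1 -> R),
    (forall i, 0 < g i) ->
    (forall i, g ord_max <= g i) ->
    Num.sqrt 2 <= g ord_max ->
    forall P : 'M[R]_n.+1,
      (Agamma g)^T *m P + P *m Agamma g = - 1%:M ->
      norm2 (P *m Gammavec g) <= C / (g ord_max ^+ 2).
Proof.
pose K : R := (2 ^ (n + n).+1)%:R.
pose D : R := n.+1%:R * K.
exists (n.+1%:R * D).
move=> g gpos gmin gsq P HP.
set ga := g ord_max in gmin gsq *.
have g1 : 1 <= ga.
  apply: le_trans gsq; have h : (1:R) <= 2 by rewrite ler1n.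
  by have := ler_wsqrtr h; rewrite sqrtr1.
have HL : forall i j, (g i + g j) * P i j =
   (i == j)%:R + \sum_(k < n.+1) (if (i:nat) == k.+1 then P k j else 0)
               + \sum_(k < n.+1) (if (j:nat) == k.+1 then P i k else 0).
  move=> i j; have := congr1 (fun M : 'M[R]_n.+1 => M i j) HP.
  rewrite mxE ATP PA !mxE mulrDl => h; lra.
have BP : forall s (i j : 'I_n.+1), (i + j < s)%N ->
    ga * `|P i j| <= (2 ^ (i + j).+1)%:R - 1.
  elim=> [//|s IH] i j hs.
  have hSi : `|\sum_(k < n.+1) (if (i:nat) == k.+1 then P k j else 0)| <= (2 ^ (i + j))%:R - 1.
    have [hi|[i0 hi]] : (i:nat) = 0%N \/ exists i0, (i:nat) = i0.+1.
      by case: (nat_of_ord i) => [|i0]; [left|right; exists i0].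

      rewrite big1 ?normr0; last by move=> k _; rewrite hi.
      rewrite subr_ge0 ler1n expn_gt0 //.
    have hi0 : (i0 < n.+1)%N by have := ltn_ord i; lia.
    rewrite (@sum_if_pred _ _ (fun k => P k j) (fun k : 'I_n.+1 => (i:nat) == k.+1) (Ordinal hi0)); last first.
      by move=> k; rewrite hi eqSS -val_eqE /= eq_sym.
    have := IH (Ordinal hi0) j ltac:(simpl; lia).
    have -> : ((Ordinal hi0 : nat) + j).+1 = (i + j)%N by rewrite /= hi.
    have := normr_ge0 (P (Ordinal hi0) j); nra.
  have hSj : `|\sum_(k < n.+1) (if (j:nat) == k.+1 then P i k else 0)| <= (2 ^ (i + j))%:R - 1.
    have [hj|[j0 hj]] : (j:nat) = 0%N \/ exists j0, (j:nat) = j0.+1.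
      by case: (nat_of_ord j) => [|j0]; [left|right; exists j0].

      rewrite big1 ?normr0; last by move=> k _; rewrite hj.
      rewrite subr_ge0 ler1n expn_gt0 //.
    have hj0 : (j0 < n.+1)%N by have := ltn_ord j; lia.
    rewrite (@sum_if_pred _ _ (fun k => P i k) (fun k : 'I_n.+1 => (j:nat) == k.+1) (Ordinal hj0)); last first.
      by move=> k; rewrite hj eqSS -val_eqE /= eq_sym.
    have := IH i (Ordinal hj0) ltac:(simpl; lia).
    have -> : ((i : nat) + Ordinal hj0).+1 = (i + j)%N by rewrite /= hj addnS.
    have := normr_ge0 (P i (Ordinal hj0)); nra.
  have hd : `|(i == j)%:R : R| <= 1 by case: (i == j); rewrite ?normr1 ?normr0.
  have e1 : `|(g i + g j) * P i j| <= 1 + ((2 ^ (i + j))%:R - 1) + ((2 ^ (i + j))%:R - 1).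
    rewrite HL; apply: le_trans (ler_normD _ _) _; apply: lerD => //.
    apply: le_trans (ler_normD _ _) _; exact: lerD.
  rewrite normrM (gtr0_norm (addr_gt0 (gpos i) (gpos j))) in e1.
  rewrite expnS natrM.
  have := gmin i; have := gpos j; have := normr_ge0 (P i j); nra.
set A := Agamma g.
have Aunit : A \in unitmx.
  rewrite unitmxE unitfE -det_tr det_trig; last first.
    apply/is_trig_mxP => i j hij; rewrite !mxE.
    rewrite ifF; last by apply/negbTE; rewrite -val_eqE /=; lia.
    by rewrite ifF //; apply/negbTE; lia.
  apply/prodf_neq0 => i _; rewrite !mxE eqxx.
  by rewrite oppr_eq0 gt_eqF.
set G := Gammavec g.
have AGB : A *m G = - Bvec R n.
  by rewrite /G /Gammavec mulmxN mulmxA mulmxV // mul1mx.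
have BG : forall s (i : 'I_n.+1), (n - i < s)%N -> ga * `|G i 0| <= 1.
  elim=> [//|s IH] i hs.
  have h0 := congr1 (fun M : 'cV[R]_n.+1 => M i 0) AGB.
  have hb : (- Bvec R n) i 0 = - (if i == ord_max then 1 else 0) by rewrite !mxE.
  move: h0; rewrite /= /A AG hb.
  case: (eqVneq i ord_max) => [->|hne].
    rewrite big1; last by move=> k _; rewrite ifF //; apply/negbTE; have := ltn_ord k; rewrite /=; lia.
    move=> h; have e : ga * G ord_max 0 = 1 by rewrite /ga; lra.
    have hg : `|ga| = ga := gtr0_norm (gpos ord_max).
    by rewrite -{1}hg -normrM e normr1.
  have hi1 : (i.+1 < n.+1)%N.
    have := ltn_ord i; move: hne; rewrite -val_eqE /= => hne; lia.
  rewrite (@sum_if_pred _ _ (fun k => G k 0) (fun k : 'I_n.+1 => (k:nat) == i.+1) (Ordinal hi1)); last first.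
    by move=> k; rewrite -val_eqE.
  rewrite oppr0 => h.
  have e : g i * G i 0 = G (Ordinal hi1) 0 by lra.
  have := IH (Ordinal hi1) ltac:(simpl; lia).
  have : ga * `|G i 0| <= g i * `|G i 0| by apply: ler_wpM2r.
  have : g i * `|G i 0| = `|G (Ordinal hi1) 0|.
    by rewrite -e normrM gtr0_norm.
  have := normr_ge0 (G (Ordinal hi1) 0); nra.
have BG' : forall i : 'I_n.+1, ga * `|G i 0| <= 1.
  by move=> i; apply: (BG n.+1); lia.
have BP' : forall i j : 'I_n.+1, ga * `|P i j| <= K.
  move=> i j; apply: le_trans (BP (i + j).+1 i j (ltnSn _)) _.
  rewrite /K; have : ((2 ^ (i + j).+1)%:R : R) <= (2 ^ (n + n).+1)%:R.
    rewrite ler_nat leq_exp2l //; have := ltn_ord i; have := ltn_ord j; lia.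
  lra.
have Bv : forall i, ga ^+ 2 * `|(P *m G) i 0| <= D.
  move=> i; rewrite mxE.
  apply: le_trans (ler_wpM2l (sqr_ge0 ga) (ler_norm_sum _ _ _)) _.
  have -> : D = \sum_(j < n.+1) K by rewrite sumr_const card_ord /D mulr_natl.
  rewrite mulr_sumr.
  apply: ler_sum => j _.
  rewrite normrM.
  have -> : ga ^+ 2 * (`|P i j| * `|G j 0|) = (ga * `|P i j|) * (ga * `|G j 0|).
    by rewrite expr2; ring.
  have ga0 : 0 <= ga by lra.
  rewrite -[K]mulr1; apply: ler_pM; rewrite ?mulr_ge0 //.
have ga0 : 0 < ga by lra.
set w := (ga ^+ 2)^-1.
have hw : ga ^+ 2 * w = 1 by rewrite /w mulfV // expf_neq0 // gt_eqF.
have w0 : 0 <= w by rewrite /w invr_ge0 exprn_ge0 // ltW.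
have K0 : 0 <= K by rewrite /K ler0n.
have D0 : 0 <= D by rewrite /D mulr_ge0 ?ler0n.
have Bv2 : forall i, ((P *m G) i 0) ^+ 2 <= (D * w) ^+ 2.
  move=> i; have h := Bv i; have hv := normr_ge0 ((P *m G) i 0).
  have e : ((P *m G) i 0) ^+ 2 = `|(P *m G) i 0| ^+ 2.
    by rewrite -normrX ger0_norm // sqr_ge0.
  have e2 : `|(P *m G) i 0| = w * (ga ^+ 2 * `|(P *m G) i 0|).
    by rewrite mulrA (mulrC w) hw mul1r.
  have le : `|(P *m G) i 0| <= D * w.
    by rewrite {1}e2 [D * w]mulrC; apply: ler_wpM2l.
  rewrite e; nra.
have N1 : (1 : R) <= n.+1%:R by rewrite ler1n.
have X0 : 0 <= n.+1%:R * D * w by rewrite !mulr_ge0 ?ler0n.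
rewrite /norm2 -/w -(ger0_norm X0) -sqrtr_sqr; apply: ler_wsqrtr.
apply: le_trans (ler_sum _ (fun i _ => Bv2 i)) _.
rewrite sumr_const card_ord.
have -> : (D * w) ^+ 2 *+ n.+1 = n.+1%:R * (D * w) ^+ 2 by rewrite mulr_natl.
have -> : (n.+1%:R * D * w) ^+ 2 = n.+1%:R ^+ 2 * (D * w) ^+ 2 by rewrite !expr2; ring.
apply: ler_wpM2r; first exact: sqr_ge0.
nra.
Qed.
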